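(* There exists a Stackelberg game $(G,L,F)$ such that $\mathcal{X}^{PS\text{-}NF}\not\subseteq\mathcal{X}^S$, where $\mathcal{X}^S$ refers to $(G,L,F)$ and $\mathcal{X}^{PS\text{-}NF}$ refers to $(G,N,\emptyset)$.
   Context: A finite game is $G=(N,\{S_p\}_{p\in N},\{u_p\}_{p\in N})$ with players $N=\{1,\dots,n\}$, finite nonempty strategy sets $S_p$, and utilities $u_p:S\to\mathbb{R}$ on $S=\prod_{p\in N}S_p$; write $s=(s_p,s_{-p})$ with $s_{-p}\in S_{-p}=\prod_{q\neq p}S_q$. $\mathcal{X}=\Delta(S)$ is the set of probability distributions on $S$ and $u_p(x)=\sum_{s\in S}x(s)u_p(s)$ for $x\in\mathcal{X}$. For $P\subseteq N$, $\mathcal{X}^{CE}_P$ is the set of $x\in\mathcal{X}$ such that for every $p\in P$ and all $s_p\neq s_p'\in S_p$: $\sum_{s_{-p}\in S_{-p}} x(s_p,s_{-p})\,(u_p(s_p,s_{-p})-u_p(s_p',s_{-p}))\ge 0$; $\mathcal{X}^{CE}=\mathcal{X}^{CE}_N$ is the set of correlated equilibria of $G$. A Stackelberg game (SG) is a triple $(G,L,F)$ with $L\cup F=N$ and $L\cap F=\emptyset$ (leaders and followers). For $P\subseteq N$, $\Pi_P$ is the set of ordered subsets of $P$ (finite sequences of pairwise distinct elements of $P$, including the empty sequence $\varnothing$); for $\pi\in\Pi_P$ and $p\in P$ not occurring in $\pi$, $\pi p$ is $\pi$ with $p$ appended; when used as a set, $\pi$ means its set of entries. $\mathbf{X}=\prod_{\pi\in\Pi_L}\mathcal{X}^{CE}_{\pi\cup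 F}$, with elements $\mathbf{x}=[x_\pi]_{\pi\in\Pi_L}$. For $\mathbf{x}\in\mathbf{X}$ and $\pi\in\Pi_L$, $x_\pi$ is stable if $u_p(x_\pi)\ge u_p(x_{\pi p})$ for all $p\in L\setminus\pi$; $\mathbf{x}$ is stable if $x_\varnothing$ is stable, and perfectly stable if $x_\pi$ is stable for every $\pi\in\Pi_L$; $\mathbf{X}^{S}$ and $\mathbf{X}^{PS}$ denote the sets of stable and perfectly stable elements of $\mathbf{X}$. $\mathcal{X}^S=\{x_\varnothing:\mathbf{x}\in\mathbf{X}^S\}$ and $\mathcal{X}^{PS}=\{x_\varnothing:\mathbf{x}\in\mathbf{X}^{PS}\}$ (for the given SG). $\mathcal{X}^{S\text{-}NF}$ and $\mathcal{X}^{PS\text{-}NF}$ are the sets $\mathcal{X}^S$ and $\mathcal{X}^{PS}$ computed for the SG $(G,N,\emptyset)$ in which every player is a leader. *)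

(* Defs.v *)
From HB Require Import structures.
From mathcomp Require Import all_boot all_order all_algebra.
Set Implicit Arguments. Unset Strict Implicit. Unset Printing Implicit Defensive.
Import Order.TTheory GRing.Theory Num.Theory.
Local Open Scope ring_scope.

Record game (R : rcfType) := Game {
  nplayers : nat;
  strat : 'I_nplayers -> finType;
  strat_nonempty : forall p, (0 < #|strat p|)%N;
  util : 'I_nplayers -> {dffun forall p : 'I_nplayers, strat p} -> R
}.
Arguments nplayers {R} g.
Arguments strat {R} g p.
Arguments util {R} g p s.

Section Defs.
Variable R : rcfType.
Variable G : game R.

Definition player := 'I_(nplayers G).
Definition profile := {dffun forall p : player, strat G p}.

Definition deviate (s : profile) (p : player) (t : strat G p) : profile :=
  [ffun q => dfwith (fun q => s q) t q].

Definition is_dist (x : {ffun profile -> R}) : Prop :=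
  (forall s, 0 <= x s) /\ \sum_(s : profile) x s = 1.

Definition exp_util (p : player) (x : {ffun profile -> R}) : R :=
  \sum_(s : profile) x s * util G p s.

Definition in_CE_P (P : {set player}) (x : {ffun profile -> R}) : Prop :=
  is_dist x /\
  forall p, p \in P -> forall sp sp' : strat G p, sp != sp' ->
    0 <= \sum_(s : profile | s p == sp)
           x s * (util G p s - util G p (deviate s sp')).

(* ordered subsets of L: duplicate-free sequences of elements of L *)
Definition ordsub (L : {set player}) (pi : seq player) : bool :=
  uniq pi && all (fun p => p \in L) pi.

(* bold x = [x_pi]_{pi in Pi_L}, represented as a function on sequences,
   only its values on Pi_L matter *)
Definition in_boldX (L F : {set player}) (xs : seq player -> {ffun profile -> R}) : Prop :=
  forall pi, ordsub L pi -> in_CE_P ([set p | p \in pi] :|: F) (xs pi).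

Definition stable_at (L : {set player}) (xs : seq player -> {ffun profile -> R})
    (pi : seq player) : Prop :=
  forall p, p \in L -> p \notin pi -> exp_util p (xs (rcons pi p)) <= exp_util p (xs pi).

Definition in_XS (L F : {set player}) (x : {ffun profile -> R}) : Prop :=
  exists xs, [/\ in_boldX L F xs, stable_at L xs [::] & xs [::] = x].

Definition in_XPS (L F : {set player}) (x : {ffun profile -> R}) : Prop :=
  exists xs, [/\ in_boldX L F xs,
                 (forall pi, ordsub L pi -> stable_at L xs pi) & xs [::] = x].

Definition in_XS_NF (x : {ffun profile -> R}) : Prop := in_XS setT set0 x.
Definition in_XPS_NF (x : {ffun profile -> R}) : Prop := in_XPS setT set0 x.

End Defs.

(* Main.v *)
Require Import Defs.
From HB Require Import structures.
From mathcomp Require Import all_boot all_order all_algebra.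
From mathcomp Require Import lra.
Import Order.TTheory GRing.Theory Num.Theory.
Local Open Scope ring_scope.

Section S.
Variable R : rcfType.
Definition st (p : 'I_2) : finType := bool.
Lemma st_ne p : (0 < #|st p|)%N. Proof. by rewrite /st card_bool. Qed.
Definition ut (p : 'I_2) (s : {dffun forall p : 'I_2, st p}) : R :=
  if p == 1 then (if (s ord0 : bool) then (if (s 1 : bool) then 2 else 1) else 0) else 0.
Definition G0 : game R := @Game R 2 st st_ne ut.
Definition xp : profile G0 := [ffun q : 'I_2 => (q == ord0) : st q].
Definition yp : profile G0 := [ffun q : 'I_2 => false : st q].
Definition delta (z : profile G0) : {ffun profile G0 -> R} := [ffun s => (s == z)%:R].

Lemma exp_delta p z : exp_util p (delta z) = util G0 p z.
Proof.
rewrite /exp_util (bigD1 z) //= big1 ?addr0; first by rewrite ffunE eqxx mul1r.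
by move=> s /negbTE; rewrite ffunE => ->; rewrite mul0r.
Qed.

Lemma ce_delta p z sp sp' :
  \sum_(s : profile G0 | s p == sp) delta z s * (util G0 p s - util G0 p (@deviate R G0 s p sp'))
  = if z p == sp then util G0 p z - util G0 p (@deviate R G0 z p sp') else 0.
Proof.
case: ifP => hz.
  rewrite (bigD1 z) //= big1 ?addr0; first by rewrite ffunE eqxx mul1r.
  by move=> s /andP[_ /negbTE]; rewrite ffunE => ->; rewrite mul0r.
rewrite big1 // => s /eqP hs; rewrite ffunE; case: eqP => [e|_]; last by rewrite mul0r.
by rewrite -e hs eqxx in hz.
Qed.

Lemma dev_other (s : profile G0) (p q : 'I_2) (t : strat G0 p) : q != p -> deviate s t q = s q.
Proof. by move=> h; rewrite /deviate ffunE dfwith_out // eq_sym. Qed.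

Lemma dev_same (s : profile G0) (p : 'I_2) (t : strat G0 p) : deviate s t p = t.
Proof. by rewrite /deviate ffunE dfwith_in. Qed.

Lemma ut_ge0 p (s : profile G0) : 0 <= util G0 p s.
Proof. rewrite /= /ut; case: ifP => // _; case: ifP => // _; case: ifP => //. Qed.

Lemma ut_y p : util G0 p yp = 0.
Proof. by rewrite /= /ut ffunE /=; case: ifP. Qed.

Lemma ut_dev_y p (t : strat G0 p) : util G0 p (@deviate R G0 yp p t) = 0.
Proof.
rewrite /= /ut; case: ifP => // /eqP ->.
by rewrite (@dev_other yp 1 ord0) // ffunE.
Qed.

Lemma delta_dist z : is_dist (delta z).
Proof.
split; first by move=> s; rewrite ffunE ler0n.
rewrite (bigD1 z) //= big1 ?addr0; first by rewrite ffunE eqxx.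
by move=> s /negbTE; rewrite ffunE => ->.
Qed.
End S.

Theorem mainTheorem15 (R : rcfType) :
  exists (G : game R) (L F : {set player G}),
    [/\ (0 < nplayers G)%N, L :|: F = setT, L :&: F = set0 &
        exists x : {ffun profile G -> R}, in_XPS_NF x /\ ~ in_XS L F x].
Proof.
exists (G0 R), [set ord0], [set 1]; split => //.
- by apply/setP => i; rewrite !inE; case: i => [[|[|]]].
- by apply/setP => i; rewrite !inE; case: i => [[|[|]]].
exists (delta R (xp R)); split.
  exists (fun pi => if pi is [::] then delta R (xp R) else delta R (yp R)); split => //.
  + move=> [|a l] _ /=; split; try exact: delta_dist.
      by move=> p; rewrite !inE.
    move=> p _ sp sp' _; rewrite ce_delta; case: ifP => // _.
    by rewrite ut_y ut_dev_y subrr.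
  + move=> pi _ p _ _.
    have -> : (if rcons pi p is [::] then delta R (xp R) else delta R (yp R)) = delta R (yp R).
      by case: pi.
    rewrite exp_delta ut_y; case: pi => [|a l]; rewrite exp_delta; exact: ut_ge0.
move=> [xs [hb _ hx]].
have := hb [::] isT; rewrite hx => -[_ h].
have := h 1 _ false true isT; rewrite !inE => /(_ isT).
rewrite ce_delta.
rewrite (_ : xp R 1 == false); last by rewrite ffunE.
rewrite /= /ut /= (@dev_same R (xp R) 1 true) (@dev_other R (xp R) 1 ord0) //= !ffunE /=.
move=> H; have H2 : (0:R) <= 1 - 2 := H; clear -H2; lra.
Qed.
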